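(* Let $F_{ij}$ ($0\le i\le m$, $0\le j\le n$) be a dual-convex $m\times n$ net in $I^3$ and let $V_{ij}\in\mathbb R^3$ be vectors such that for each $0\le k<m$, $0\le l<n$ there is an infinitesimal isotropic congruence $V$ (depending on $k,l$) with $V_{ij}=V(F_{ij})$ for all $i\in\{k,k+1\}$, $j\in\{l,l+1\}$. Then $F_{ij}+tV_{ij}$ is a dual-convex $m\times n$ net for all $t$ sufficiently small in absolute value.
   Context: $I^3$ is $\mathbb{R}^3$ with coordinates $(x,y,z)$; a line or plane is isotropic if parallel to the $z$-axis. An infinitesimal isotropic congruence is a vector field $V(\mathbf x)=a\mathbf x+\mathbf b$ with $\mathbf b\in\mathbb R^3$ and $a=\begin{pmatrix}0&-\phi&0\\ \phi&0&0\\ c_1&c_2&0\end{pmatrix}$, $\phi,c_1,c_2\in\mathbb R$. An $m\times n$ net: points $F_{ij}$, $0\le i\le m,0\le j\le n$, with $F_{ij},F_{i+1,j},F_{i+1,j+1},F_{i,j+1}$ consecutive vertices of a convex planar quadrilateral (face $p_{ij}$) for all $0\le i<m,0\le j<n$. Boundary vertices: $i\in\{0,m\}$ or $j\in\{0,n\}$; consecutive faces around non-boundary $F_{ij}$: $p_{i-1,j-1},p_{i,j-1},p_{ij},p_{i-1,j}$. Convex 4-hedral angle with vertex $O$: union of rays from $O$ meeting a convex quadrilateral in a plane not through $O$; flat angles: rays through one side; admissible: isotropic line through $O$ meets its interior. Dual-convex: $m,n\ge2$ and at each non-boundary vertex the four consecutive face planes are the planes of four consecutive flat angles of an admissible convex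 4-hedral angle. *)

(* Defs.v *)
From Stdlib Require Import Reals Lra.
Open Scope R_scope.

(* Points / vectors of I^3 = R^3 with coordinates (x,y,z). *)
Record vec3 := V3 { vx : R; vy : R; vz : R }.

Definition vadd (u v : vec3) : vec3 := V3 (vx u + vx v) (vy u + vy v) (vz u + vz v).
Definition vsub (u v : vec3) : vec3 := V3 (vx u - vx v) (vy u - vy v) (vz u - vz v).
Definition vscale (a : R) (u : vec3) : vec3 := V3 (a * vx u) (a * vy u) (a * vz u).
Definition vdot (u v : vec3) : R := vx u * vx v + vy u * vy v + vz u * vz v.
Definition vcross (u v : vec3) : vec3 :=
  V3 (vy u * vz v - vz u * vy v) (vz u * vx v - vx u * vz v) (vx u * vy v - vy u * vx v).
Definition vzero : vec3 := V3 0 0 0.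
(* unit vector of the z-axis (isotropic direction) *)
Definition e3 : vec3 := V3 0 0 1.

Definition noncollinear (A B C : vec3) : Prop := vcross (vsub B A) (vsub C A) <> vzero.

Definition in_plane (A B C P : vec3) : Prop :=
  exists s u : R, P = vadd A (vadd (vscale s (vsub B A)) (vscale u (vsub C A))).

Definition same_plane (A B C A' B' C' : vec3) : Prop :=
  forall P, in_plane A B C P <-> in_plane A' B' C' P.

(* A, B, C, D are consecutive vertices of a (non-degenerate) convex planar
   quadrilateral: A, B, C are not collinear and the diagonals AC and BD meet
   at a point interior to both of them (this forces planarity and strict
   convexity). *)
Definition convex_quad (A B C D : vec3) : Prop :=
  noncollinear A B C /\
  exists s u : R, 0 < s < 1 /\ 0 < u < 1 /\
    vadd A (vscale s (vsub C A)) = vadd B (vscale u (vsub D B)).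

Definition in_quad_region (A B C D P : vec3) : Prop :=
  exists a b c d : R, 0 <= a /\ 0 <= b /\ 0 <= c /\ 0 <= d /\ a + b + c + d = 1 /\
    P = vadd (vscale a A) (vadd (vscale b B) (vadd (vscale c C) (vscale d D))).

Definition in_angle (O Q1 Q2 Q3 Q4 P : vec3) : Prop :=
  exists (lam : R) (X : vec3), 0 <= lam /\ in_quad_region Q1 Q2 Q3 Q4 X /\
    P = vadd O (vscale lam (vsub X O)).

Definition is_convex_4hedral_angle (O Q1 Q2 Q3 Q4 : vec3) : Prop :=
  convex_quad Q1 Q2 Q3 Q4 /\ ~ in_plane Q1 Q2 Q3 O.

Definition in_interior (S : vec3 -> Prop) (P : vec3) : Prop :=
  exists eps : R, 0 < eps /\
    forall P', vdot (vsub P' P) (vsub P' P) < eps * eps -> S P'.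

Definition admissible_angle (O Q1 Q2 Q3 Q4 : vec3) : Prop :=
  exists t : R, in_interior (in_angle O Q1 Q2 Q3 Q4) (vadd O (vscale t e3)).

(* Nets: F i j for 0 <= i <= m, 0 <= j <= n (values outside are irrelevant). *)
Definition net := nat -> nat -> vec3.

Definition is_net (m n : nat) (F : net) : Prop :=
  forall i j, (i < m)%nat -> (j < n)%nat ->
    convex_quad (F i j) (F (S i) j) (F (S i) (S j)) (F i (S j)).

Definition face_plane_eq (F : net) (i j : nat) (A B C : vec3) : Prop :=
  same_plane (F i j) (F (S i) j) (F (S i) (S j)) A B C.

(* At the non-boundary vertex F_ij (i,j >= 1), the four consecutive face
   planes p_{i-1,j-1}, p_{i,j-1}, p_{ij}, p_{i-1,j} are the planes of four
   consecutive flat angles of an admissible convex 4-hedral angle. *)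
Definition dual_convex_at (F : net) (i j : nat) : Prop :=
  exists O Q1 Q2 Q3 Q4 : vec3,
    is_convex_4hedral_angle O Q1 Q2 Q3 Q4 /\ admissible_angle O Q1 Q2 Q3 Q4 /\
    face_plane_eq F (pred i) (pred j) O Q1 Q2 /\
    face_plane_eq F i (pred j) O Q2 Q3 /\
    face_plane_eq F i j O Q3 Q4 /\
    face_plane_eq F (pred i) j O Q4 Q1.

Definition dual_convex_net (m n : nat) (F : net) : Prop :=
  is_net m n F /\ (2 <= m)%nat /\ (2 <= n)%nat /\
  forall i j, (0 < i < m)%nat -> (0 < j < n)%nat -> dual_convex_at F i j.

(* Infinitesimal isotropic congruence V(x) = a x + b with
   a = [[0,-phi,0],[phi,0,0],[c1,c2,0]]. *)
Definition iso_congruence (phi c1 c2 : R) (b : vec3) (x : vec3) : vec3 :=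
  vadd (V3 (- phi * vy x) (phi * vx x) (c1 * vx x + c2 * vy x)) b.

(* Main.v *)
Require Import Defs.
From Stdlib Require Import Reals.
Open Scope R_scope.
From Stdlib Require Import Reals Lra Ranalysis_reg Lia.
Open Scope R_scope.

Definition det3 (a b c : vec3) : R := vdot (vcross a b) c.

Ltac vunf := unfold det3, vdot, vcross, vadd, vsub, vscale, vzero, e3 in *; simpl in *.

Lemma vec3_eq (u v : vec3) : vx u = vx v -> vy u = vy v -> vz u = vz v -> u = v.
Proof. destruct u, v; simpl; intros; subst; reflexivity. Qed.

Ltac vext := apply vec3_eq; vunf.

Lemma vcomp (u v : vec3) : u = v -> vx u = vx v /\ vy u = vy v /\ vz u = vz v.
Proof. intros ->; auto. Qed.

Lemma cramer (a b c v : vec3) : det3 a b c <> 0 ->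
  v = vadd (vscale (det3 v b c / det3 a b c) a)
      (vadd (vscale (det3 a v c / det3 a b c) b) (vscale (det3 a b v / det3 a b c) c)).
Proof.
  intros H. destruct a as [a1 a2 a3], b as [b1 b2 b3], c as [c1 c2 c3], v as [v1 v2 v3].
  unfold det3 in *; vext; field; exact H.
Qed.

Lemma rel4 (d1 d2 d3 d4 : vec3) :
  vsub (vadd (vscale (det3 d2 d3 d4) d1) (vscale (det3 d1 d2 d4) d3))
       (vadd (vscale (det3 d1 d3 d4) d2) (vscale (det3 d1 d2 d3) d4)) = vzero.
Proof. vext; ring. Qed.

Lemma det_lin_dot (d a b : vec3) : det3 d a b = vdot d (vcross a b).
Proof. vunf; ring. Qed.

Lemma vdot_nonneg d : 0 <= vdot d d.
Proof. destruct d as [x y z]; unfold vdot; simpl. nra. Qed.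

Lemma lagrange (d w : vec3) : vdot d w * vdot d w <= vdot d d * vdot w w.
Proof.
  assert (vdot d d * vdot w w - vdot d w * vdot d w = vdot (vcross d w) (vcross d w)).
  { destruct d, w; vunf; ring. }
  pose proof (vdot_nonneg (vcross d w)). lra.
Qed.

Lemma vdot_zero d : vdot d d = 0 -> d = vzero.
Proof. destruct d as [x y z]; vunf; intros H.
  assert (x = 0) by nra. assert (y = 0) by nra. assert (z = 0) by nra. subst; reflexivity. Qed.

Definition ev (P : R -> Prop) : Prop := exists d, 0 < d /\ forall t, Rabs t < d -> P t.

Lemma ev_and P Q : ev P -> ev Q -> ev (fun t => P t /\ Q t).
Proof.
  intros [d1 [h1 H1]] [d2 [h2 H2]]. exists (Rmin d1 d2). split.
  - apply Rmin_glb_lt; auto.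
  - intros t Ht. split; [apply H1 | apply H2]; eapply Rlt_le_trans; eauto;
      [apply Rmin_l | apply Rmin_r].
Qed.

Lemma ev_mono (P Q : R -> Prop) : (forall t, P t -> Q t) -> ev P -> ev Q.
Proof. intros H [d [h1 H1]]; exists d; split; auto. Qed.

Lemma ev_true (P : R -> Prop) : (forall t, P t) -> ev P.
Proof. intros H; exists 1; split; [lra|auto]. Qed.

Lemma ev_forall_lt (n : nat) (P : nat -> R -> Prop) :
  (forall i, (i < n)%nat -> ev (P i)) -> ev (fun t => forall i, (i < n)%nat -> P i t).
Proof.
  induction n; intros H.
  - apply ev_true; intros; lia.
  - assert (A := IHn (fun i Hi => H i (Nat.lt_lt_succ_r _ _ Hi))).
    assert (B := H n (Nat.lt_succ_diag_r n)).
    apply (ev_mono _ _ (fun t HP => HP) ) in A.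
    eapply ev_mono; [| exact (ev_and _ _ A B)].
    intros t [HA HB] i Hi. destruct (Nat.eq_dec i n); [subst; auto | apply HA; lia].
Qed.

Lemma ev_pos (f : R -> R) : continuity_pt f 0 -> 0 < f 0 -> ev (fun t => 0 < f t).
Proof.
  intros Hc Hf. destruct (Hc (f 0) Hf) as [a [ha Ha]].
  exists a; split; auto. intros t Ht.
  destruct (Req_dec t 0) as [->|Hne]; auto.
  assert (R_dist (f t) (f 0) < f 0).
  { apply Ha. split. split; [exact I| auto]. simpl. unfold R_dist. rewrite Rminus_0_r. auto. }
  unfold R_dist in H. apply Rabs_def2 in H. lra.
Qed.

Definition lc4 (O : vec3) (m1 m2 m3 m4 : R) (d1 d2 d3 d4 : vec3) : vec3 :=
  vadd O (vadd (vscale m1 d1) (vadd (vscale m2 d2) (vadd (vscale m3 d3) (vscale m4 d4)))).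

Lemma cone_in_angle O d1 d2 d3 d4 c1 c2 c3 c4 m1 m2 m3 m4 :
  0 < c1 -> 0 < c2 -> 0 < c3 -> 0 < c4 ->
  0 <= m1 -> 0 <= m2 -> 0 <= m3 -> 0 <= m4 ->
  in_angle O (vadd O (vscale c1 d1)) (vadd O (vscale c2 d2)) (vadd O (vscale c3 d3))
    (vadd O (vscale c4 d4)) (lc4 O m1 m2 m3 m4 d1 d2 d3 d4).
Proof.
  intros. set (n1 := m1 / c1). set (n2 := m2/c2). set (n3 := m3/c3). set (n4 := m4/c4).
  assert (0 <= n1) by (unfold n1; apply Rmult_le_pos; [lra| left; apply Rinv_0_lt_compat; lra]).
  assert (0 <= n2) by (unfold n2; apply Rmult_le_pos; [lra| left; apply Rinv_0_lt_compat; lra]).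
  assert (0 <= n3) by (unfold n3; apply Rmult_le_pos; [lra| left; apply Rinv_0_lt_compat; lra]).
  assert (0 <= n4) by (unfold n4; apply Rmult_le_pos; [lra| left; apply Rinv_0_lt_compat; lra]).
  destruct (Req_dec (n1+n2+n3+n4) 0) as [HL|HL].
  - assert (n1 = 0) by lra. assert (n2 = 0) by lra. assert (n3 = 0) by lra. assert (n4 = 0) by lra.
    assert (m1 = 0). { unfold n1 in *. apply (f_equal (fun x => x * c1)) in H11. field_simplify in H11; lra. }
    assert (m2 = 0). { unfold n2 in *. apply (f_equal (fun x => x * c2)) in H12. field_simplify in H12; lra. }
    assert (m3 = 0). { unfold n3 in *. apply (f_equal (fun x => x * c3)) in H13. field_simplify in H13; lra. }
    assert (m4 = 0). { unfold n4 in *. apply (f_equal (fun x => x * c4)) in H14. field_simplify in H14; lra. }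
    subst. exists 0, (vadd O (vscale c1 d1)). split; [lra|]. split.
    + exists 1, 0, 0, 0. repeat split; try lra. destruct O, d1; vext; ring.
    + unfold lc4. destruct O, d1, d2, d3, d4; vext; ring.
  - assert (HL0 : 0 < n1+n2+n3+n4) by lra. remember (n1+n2+n3+n4) as L eqn:HLd.
    exists L, (vadd (vscale (n1/L) (vadd O (vscale c1 d1))) (vadd (vscale (n2/L) (vadd O (vscale c2 d2)))
       (vadd (vscale (n3/L) (vadd O (vscale c3 d3))) (vscale (n4/L) (vadd O (vscale c4 d4)))))).
    split; [lra|]. split.
    + exists (n1/L), (n2/L), (n3/L), (n4/L).
      repeat split; try (apply Rmult_le_pos; [lra| left; apply Rinv_0_lt_compat; lra]).
      assert (E: n1/L+n2/L+n3/L+n4/L = (n1+n2+n3+n4)/L) by (field; lra). rewrite E, <- HLd. field. lra.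
    + assert (E1 : m1 = n1*c1) by (unfold n1; field; lra).
      assert (E2 : m2 = n2*c2) by (unfold n2; field; lra).
      assert (E3 : m3 = n3*c3) by (unfold n3; field; lra).
      assert (E4 : m4 = n4*c4) by (unfold n4; field; lra).
      clearbody n1 n2 n3 n4. subst m1 m2 m3 m4 L.
      unfold lc4. destruct O, d1, d2, d3, d4; vext; field; lra.
Qed.

Lemma small_coef (x W dd S k : R) : 0 <= W -> W <= S -> 1 <= S -> 0 <= dd ->
  x*x <= dd*W -> dd < k*k -> 0 < k -> Rabs x < k * S.
Proof.
  intros. assert (x*x < (k*S)*(k*S)).
  { assert (dd*W <= dd*S) by nra. assert (dd*S < k*k*S) by nra. assert (k*k*S <= k*k*(S*S)) by nra. nra. }
  apply Rsqr_lt_abs_0 in H6. rewrite (Rabs_right (k*S)) in H6; [auto|nra].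
Qed.

Lemma cone_interior O d1 d2 d3 d4 c1 c2 c3 c4 b1 b2 b3 b4 :
  det3 d1 d2 d3 <> 0 ->
  0 < c1 -> 0 < c2 -> 0 < c3 -> 0 < c4 ->
  0 < b1 -> 0 < b2 -> 0 < b3 -> 0 < b4 ->
  in_interior (in_angle O (vadd O (vscale c1 d1)) (vadd O (vscale c2 d2)) (vadd O (vscale c3 d3))
    (vadd O (vscale c4 d4))) (lc4 O b1 b2 b3 b4 d1 d2 d3 d4).
Proof.
  intros HD. intros.
  set (D := det3 d1 d2 d3) in *.
  set (w1 := vcross d2 d3). set (w2 := vcross d3 d1). set (w3 := vcross d1 d2).
  set (m := Rmin b1 (Rmin b2 b3)).
  assert (Hm : 0 < m) by (unfold m; repeat apply Rmin_glb_lt; auto).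
  assert (Hm1 : m <= b1) by (unfold m; apply Rmin_l).
  assert (Hm2 : m <= b2) by (unfold m; eapply Rle_trans; [apply Rmin_r| apply Rmin_l]).
  assert (Hm3 : m <= b3) by (unfold m; eapply Rle_trans; [apply Rmin_r| apply Rmin_r]).
  pose proof (vdot_nonneg w1). pose proof (vdot_nonneg w2). pose proof (vdot_nonneg w3).
  set (S := 1 + vdot w1 w1 + vdot w2 w2 + vdot w3 w3).
  assert (HS : 1 <= S) by (unfold S; lra).
  assert (HaD : 0 < Rabs D) by (apply Rabs_pos_lt; auto).
  set (k := m * Rabs D / S).
  assert (Hk : 0 < k) by (unfold k; apply Rdiv_lt_0_compat; [nra | lra]).
  exists k. split; auto.
  intros P' HP'.
  set (p := lc4 O b1 b2 b3 b4 d1 d2 d3 d4) in *.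
  remember (vsub P' p) as dl eqn:Hdl.
  pose proof (vdot_nonneg dl) as Hdd.
  pose proof (cramer d1 d2 d3 dl HD) as Hcr. fold D in Hcr.
  assert (E1 : det3 dl d2 d3 = vdot dl w1) by (unfold w1; apply det_lin_dot).
  assert (E2 : det3 d1 dl d3 = vdot dl w2) by (unfold w2, det3; destruct d1, d3, dl; vunf; ring).
  assert (E3 : det3 d1 d2 dl = vdot dl w3) by (unfold w3, det3; destruct d1, d2, dl; vunf; ring).
  rewrite E1, E2, E3 in Hcr.
  assert (G : forall w, 0 <= vdot w w -> vdot w w <= S -> Rabs (vdot dl w / D) < m).
  { intros w Hw0 HwS.
    assert (HH : Rabs (vdot dl w) < k * S).
    { apply (small_coef _ (vdot w w) (vdot dl dl)); auto. apply lagrange. }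
    unfold Rdiv. rewrite Rabs_mult, Rabs_inv.
    unfold k in HH. replace (m * Rabs D / S * S) with (m * Rabs D) in HH by (field; lra).
    apply (Rmult_lt_reg_r (Rabs D)); auto. rewrite Rmult_assoc, Rinv_l; lra. }
  assert (G1 := G w1 H7 ltac:(unfold S; lra)).
  assert (G2 := G w2 H8 ltac:(unfold S; lra)).
  assert (G3 := G w3 H9 ltac:(unfold S; lra)).
  apply Rabs_def2 in G1, G2, G3.
  assert (HP : P' = lc4 O (b1 + vdot dl w1 / D) (b2 + vdot dl w2 / D) (b3 + vdot dl w3 / D) b4 d1 d2 d3 d4).
  { clearbody w1 w2 w3 D. set (g1 := vdot dl w1 / D) in *. set (g2 := vdot dl w2 / D) in *.
    set (g3 := vdot dl w3 / D) in *. clearbody g1 g2 g3.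
    apply vcomp in Hcr. apply vcomp in Hdl. unfold p, lc4 in *. clear -Hcr Hdl.
    destruct P', O, d1, d2, d3, d4, dl. vunf. destruct Hcr as [? [? ?]]. destruct Hdl as [? [? ?]].
    apply vec3_eq; simpl; nra. }
  rewrite HP. apply cone_in_angle; auto; lra.
Qed.
Lemma noncoll_dist A B C : noncollinear A B C -> A <> B /\ B <> C.
Proof.
  unfold noncollinear; intros H; split; intros E; subst; apply H; vext; ring.
Qed.

Lemma det_cross a b : det3 a b (vcross a b) = vdot (vcross a b) (vcross a b).
Proof. unfold det3; reflexivity. Qed.

Lemma det_shift O Q1 Q2 Q3 : det3 (vsub Q2 Q1) (vsub Q3 Q1) (vsub O Q1) = - det3 (vsub Q1 O) (vsub Q2 O) (vsub Q3 O).
Proof. vunf; ring. Qed.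

Lemma old_D O Q1 Q2 Q3 : noncollinear Q1 Q2 Q3 -> ~ in_plane Q1 Q2 Q3 O ->
  det3 (vsub Q1 O) (vsub Q2 O) (vsub Q3 O) <> 0.
Proof.
  intros Hn Hp HD. apply Hp.
  set (a := vsub Q2 Q1) in *. set (b := vsub Q3 Q1) in *. set (w := vsub O Q1).
  set (n := vcross a b) in *.
  assert (HN : vdot n n <> 0) by (intro E; apply Hn, vdot_zero, E).
  assert (Hab : det3 a b n = vdot n n) by apply det_cross.
  assert (Hw : det3 a b w = 0).
  { unfold a, b, w. rewrite det_shift, HD. ring. }
  assert (Hc := cramer a b n w ltac:(rewrite Hab; exact HN)).
  rewrite Hw in Hc.
  exists (det3 w b n / det3 a b n), (det3 a w n / det3 a b n).
  set (k1 := det3 w b n / det3 a b n) in *. set (k2 := det3 a w n / det3 a b n) in *.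
  set (k3 := 0 / det3 a b n) in *. assert (Hk3 : k3 = 0) by (unfold k3, Rdiv; ring).
  clearbody k1 k2 k3. subst k3.
  apply vcomp in Hc. unfold w in Hc. unfold in_plane. fold a b. clearbody a b n. clear - Hc.
  destruct O, Q1, a, b, n. vunf. destruct Hc as [? [? ?]].
  apply vec3_eq; simpl; lra.
Qed.

Lemma quad_rel Q1 Q2 Q3 Q4 O : convex_quad Q1 Q2 Q3 Q4 ->
  exists s u, 0 < s < 1 /\ 0 < u < 1 /\
   vadd (vscale (1-s) (vsub Q1 O)) (vscale s (vsub Q3 O)) =
   vadd (vscale (1-u) (vsub Q2 O)) (vscale u (vsub Q4 O)).
Proof.
  intros [_ [s [u [Hs [Hu E]]]]]. exists s, u. split; auto. split; auto.
  apply vcomp in E. destruct Q1, Q2, Q3, Q4, O; vunf. destruct E as [? [? ?]].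
  apply vec3_eq; simpl; lra.
Qed.

Lemma solve_lin u d X : u <> 0 -> u*d = X -> d = 1/u*X.
Proof. intros; subst X; field; auto. Qed.

Lemma dets_pos e1 e2 e3 e4 s u : 0 < s < 1 -> 0 < u < 1 ->
  vadd (vscale (1-s) e1) (vscale s e3) = vadd (vscale (1-u) e2) (vscale u e4) ->
  det3 e1 e2 e3 <> 0 ->
  0 < det3 e2 e3 e4 * det3 e1 e2 e3 /\ 0 < det3 e1 e3 e4 * det3 e1 e2 e3 /\
  0 < det3 e1 e2 e4 * det3 e1 e2 e3.
Proof.
  intros Hs Hu E HD.
  assert (E4 : e4 = vscale (1/u) (vsub (vadd (vscale (1-s) e1) (vscale s e3)) (vscale (1-u) e2))).
  { apply vcomp in E. destruct e1, e2, e3, e4; vunf. destruct E as [? [? ?]].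
    apply vec3_eq; simpl; apply solve_lin; lra. }
  subst e4. set (D := det3 e1 e2 e3) in *.
  assert (A1 : det3 e2 e3 (vscale (1 / u) (vsub (vadd (vscale (1 - s) e1) (vscale s e3)) (vscale (1 - u) e2))) = (1-s)/u * D)
    by (unfold D; destruct e1, e2, e3; vunf; field; lra).
  assert (A2 : det3 e1 e3 (vscale (1 / u) (vsub (vadd (vscale (1 - s) e1) (vscale s e3)) (vscale (1 - u) e2))) = (1-u)/u * D)
    by (unfold D; destruct e1, e2, e3; vunf; field; lra).
  assert (A3 : det3 e1 e2 (vscale (1 / u) (vsub (vadd (vscale (1 - s) e1) (vscale s e3)) (vscale (1 - u) e2))) = s/u * D)
    by (unfold D; destruct e1, e2, e3; vunf; field; lra).
  rewrite A1, A2, A3. clearbody D.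
  assert (0 < D*D) by (destruct (Rlt_or_le 0 D); nra).
  assert (0 < (1-s)/u) by (apply Rdiv_lt_0_compat; lra).
  assert (0 < (1-u)/u) by (apply Rdiv_lt_0_compat; lra).
  assert (0 < s/u) by (apply Rdiv_lt_0_compat; lra).
  repeat split; nra.
Qed.

Lemma old_adm O Q1 Q2 Q3 Q4 t0 :
  in_interior (in_angle O Q1 Q2 Q3 Q4) (vadd O (vscale t0 e3)) ->
  exists b1 b2 b3 b4, 0 < b1 /\ 0 < b2 /\ 0 < b3 /\ 0 < b4 /\
    vadd O (vscale t0 e3) = lc4 O b1 b2 b3 b4 (vsub Q1 O) (vsub Q2 O) (vsub Q3 O) (vsub Q4 O).
Proof.
  intros [eps [Heps H]].
  set (s := vadd (vsub Q1 O) (vadd (vsub Q2 O) (vadd (vsub Q3 O) (vsub Q4 O)))).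
  pose proof (vdot_nonneg s) as Hs.
  set (eta := eps / (1 + vdot s s)).
  assert (Heta : 0 < eta) by (apply Rdiv_lt_0_compat; lra).
  assert (Hee : eta * (1 + vdot s s) = eps) by (unfold eta; field; lra).
  set (p := vadd O (vscale t0 e3)) in *.
  destruct (H (vsub p (vscale eta s))) as [lam [X [Hlam [[a [b [c [d [Ha [Hb [Hc [Hd [Hsum HX]]]]]]]]] HP]]]].
  { replace (vsub (vsub p (vscale eta s)) p) with (vscale (-eta) s) by (destruct p, s; vext; ring).
    replace (vdot (vscale (- eta) s) (vscale (- eta) s)) with (eta*eta*vdot s s) by (destruct s; vunf; ring).
    rewrite <- Hee. clearbody eta s. nra. }
  exists (lam*a + eta), (lam*b+eta), (lam*c+eta), (lam*d+eta).
  repeat split; try nra.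
  subst X. apply vcomp in HP. unfold s, lc4 in *. clearbody eta p. clear -HP Hsum.
  destruct p, O, Q1, Q2, Q3, Q4; vunf. destruct HP as [? [? ?]].
  apply vec3_eq; simpl; nra.
Qed.

Lemma nc_dot O' d1 d2 d3 x y :
  vdot (vcross (vsub (vadd O' (vscale y d2)) (vadd O' (vscale x d1)))
               (vsub (vadd O' (vscale x d3)) (vadd O' (vscale x d1)))) d1 = x*y*det3 d1 d2 d3.
Proof. vunf; ring. Qed.

Lemma plane_dot O' d1 d2 d3 x y s u n :
  vdot (vsub (vadd (vadd O' (vscale x d1))
     (vadd (vscale s (vsub (vadd O' (vscale y d2)) (vadd O' (vscale x d1))))
           (vscale u (vsub (vadd O' (vscale x d3)) (vadd O' (vscale x d1)))))) O') n
  = x*(1-s-u) * vdot d1 n + s*y * vdot d2 n + u*x*vdot d3 n.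
Proof. vunf; ring. Qed.

Lemma new_angle (O' d1 d2 d3 d4 : vec3) (t0 b4 : R) :
  0 < b4 ->
  0 < det3 d2 d3 d4 * det3 d1 d2 d3 ->
  0 < det3 d1 d3 d4 * det3 d1 d2 d3 ->
  0 < det3 d1 d2 d4 * det3 d1 d2 d3 ->
  0 < det3 d1 d2 d3 * det3 d1 d2 d3 ->
  0 < det3 (vsub (vscale t0 e3) (vscale b4 d4)) d2 d3 * det3 d1 d2 d3 ->
  0 < det3 d1 (vsub (vscale t0 e3) (vscale b4 d4)) d3 * det3 d1 d2 d3 ->
  0 < det3 d1 d2 (vsub (vscale t0 e3) (vscale b4 d4)) * det3 d1 d2 d3 ->
  exists c1 c2 c3 c4, 0 < c1 /\ 0 < c2 /\ 0 < c3 /\ 0 < c4 /\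
    is_convex_4hedral_angle O' (vadd O' (vscale c1 d1)) (vadd O' (vscale c2 d2))
       (vadd O' (vscale c3 d3)) (vadd O' (vscale c4 d4)) /\
    admissible_angle O' (vadd O' (vscale c1 d1)) (vadd O' (vscale c2 d2))
       (vadd O' (vscale c3 d3)) (vadd O' (vscale c4 d4)).
Proof.
  intros Hb4 H1 H2 H3 H4 N1 N2 N3.
  set (v := vsub (vscale t0 e3) (vscale b4 d4)) in *.
  pose proof (rel4 d1 d2 d3 d4) as Hrel.
  set (a1 := det3 d2 d3 d4) in *. set (a2 := det3 d1 d3 d4) in *.
  set (a3 := det3 d1 d2 d4) in *. set (a4 := det3 d1 d2 d3) in *.
  assert (Ha4 : a4 <> 0) by (intro E; rewrite E in H4; lra).
  set (sg := a1*a4 + a3*a4). set (tu := a2*a4 + a4*a4).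
  assert (Hsg : 0 < sg) by (unfold sg; lra). assert (Htu : 0 < tu) by (unfold tu; lra).
  exists sg, tu, sg, tu. do 4 (split; [assumption|]).
  split; [split; [split|]|].
  -
    unfold noncollinear. intro E.
    assert (Z := nc_dot O' d1 d2 d3 sg tu). rewrite E in Z. fold a4 in Z.
    unfold vdot, vzero in Z; simpl in Z.
    assert (sg * tu * a4 <> 0) by (apply Rmult_integral_contrapositive; split; [nra|auto]).
    lra.
  - exists ((a3*a4)/sg), ((a4*a4)/tu). split; [split|split; [split|]].
    + apply Rdiv_lt_0_compat; lra.
    + apply (Rmult_lt_reg_r sg); auto. unfold Rdiv. rewrite Rmult_assoc, Rinv_l; unfold sg in *; lra.
    + apply Rdiv_lt_0_compat; lra.
    + apply (Rmult_lt_reg_r tu); auto. unfold Rdiv. rewrite Rmult_assoc, Rinv_l; unfold tu in *; lra.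
    + assert (Esg : sg = a1*a4 + a3*a4) by reflexivity. assert (Etu : tu = a2*a4+a4*a4) by reflexivity.
      clearbody sg tu a1 a2 a3 a4 v.
      transitivity (vadd O' (vadd (vscale (a1*a4) d1) (vscale (a3*a4) d3))).
      { subst sg. destruct O', d1, d3. vext; field; lra. }
      transitivity (vadd O' (vadd (vscale (a2*a4) d2) (vscale (a4*a4) d4))).
      2:{ subst tu. destruct O', d2, d4. vext; field; lra. }
      apply vcomp in Hrel. clear -Hrel.
      destruct O', d1, d2, d3, d4; vunf. destruct Hrel as [R1 [R2 R3]].
      apply vec3_eq; simpl;
      [ pose proof (f_equal (Rmult a4) R1) as K | pose proof (f_equal (Rmult a4) R2) as K
      | pose proof (f_equal (Rmult a4) R3) as K]; ring_simplify in K; lra.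
  -
    intros [s [u E]].
    assert (Z : forall n, vdot (vsub (vadd (vadd O' (vscale sg d1))
     (vadd (vscale s (vsub (vadd O' (vscale tu d2)) (vadd O' (vscale sg d1))))
           (vscale u (vsub (vadd O' (vscale sg d3)) (vadd O' (vscale sg d1)))))) O') n = 0).
    { intro n. rewrite <- E. vunf; ring. }
    assert (Z1 := Z (vcross d2 d3)). assert (Z2 := Z (vcross d3 d1)). assert (Z3 := Z (vcross d1 d2)).
    rewrite plane_dot in Z1, Z2, Z3.
    assert (F11 : vdot d1 (vcross d2 d3) = a4) by (unfold a4; vunf; ring).
    assert (F21 : vdot d2 (vcross d2 d3) = 0) by (vunf; ring).
    assert (F31 : vdot d3 (vcross d2 d3) = 0) by (vunf; ring).
    assert (F12 : vdot d1 (vcross d3 d1) = 0) by (vunf; ring).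
    assert (F22 : vdot d2 (vcross d3 d1) = a4) by (unfold a4; vunf; ring).
    assert (F32 : vdot d3 (vcross d3 d1) = 0) by (vunf; ring).
    assert (F13 : vdot d1 (vcross d1 d2) = 0) by (vunf; ring).
    assert (F23 : vdot d2 (vcross d1 d2) = 0) by (vunf; ring).
    assert (F33 : vdot d3 (vcross d1 d2) = a4) by (unfold a4; vunf; ring).
    rewrite F11, F21, F31 in Z1. rewrite F12, F22, F32 in Z2. rewrite F13, F23, F33 in Z3.
    assert (s = 0). { assert (s * (tu * a4) = 0) by lra. apply Rmult_integral in H. destruct H; auto.
                      exfalso. apply Rmult_integral in H. destruct H; lra. }
    assert (u = 0). { assert (u * (sg * a4) = 0) by lra. apply Rmult_integral in H0. destruct H0; auto.
                      exfalso. apply Rmult_integral in H0. destruct H0; lra. }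
    subst s u. assert (sg * a4 = 0) by lra. apply Rmult_integral in H; destruct H; lra.
  - exists t0.
    assert (Hcr := cramer d1 d2 d3 v Ha4). fold a4 in Hcr.
    set (n1 := det3 v d2 d3) in *. set (n2 := det3 d1 v d3) in *. set (n3 := det3 d1 d2 v) in *.
    assert (HP : vadd O' (vscale t0 e3) = lc4 O' (n1/a4) (n2/a4) (n3/a4) b4 d1 d2 d3 d4).
    { assert (Ev : v = vsub (vscale t0 e3) (vscale b4 d4)) by reflexivity.
      set (k1 := n1/a4) in *. set (k2 := n2/a4) in *. set (k3 := n3/a4) in *.
      clearbody k1 k2 k3 v. apply vcomp in Hcr. apply vcomp in Ev. unfold lc4. clear -Hcr Ev.
      destruct O', d1, d2, d3, d4, v; vunf. destruct Hcr as [? [? ?]]. destruct Ev as [? [? ?]].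
      apply vec3_eq; simpl; lra. }
    rewrite HP. apply cone_interior; auto.
    all: assert (0 < a4*a4) by auto.
    all: unfold Rdiv; replace (/ a4) with (a4 * / (a4*a4)) by (field; auto).
    all: rewrite <- Rmult_assoc; apply Rmult_lt_0_compat; auto; apply Rinv_0_lt_compat; auto.
Qed.

Definition dd (e w : vec3) (t : R) : vec3 := vadd e (vscale t w).

Lemma dd0 e w : dd e w 0 = e.
Proof. unfold dd; destruct e; vext; ring. Qed.

Ltac contv := unfold dd, det3, vdot, vcross, vadd, vsub, vscale, e3; simpl; reg.

Lemma core O Q1 Q2 Q3 Q4 w1 w2 w3 w4 :
  is_convex_4hedral_angle O Q1 Q2 Q3 Q4 -> admissible_angle O Q1 Q2 Q3 Q4 ->
  ev (fun t => forall O', exists c1 c2 c3 c4, 0 < c1 /\ 0 < c2 /\ 0 < c3 /\ 0 < c4 /\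
    is_convex_4hedral_angle O' (vadd O' (vscale c1 (dd (vsub Q1 O) w1 t)))
       (vadd O' (vscale c2 (dd (vsub Q2 O) w2 t)))
       (vadd O' (vscale c3 (dd (vsub Q3 O) w3 t))) (vadd O' (vscale c4 (dd (vsub Q4 O) w4 t))) /\
    admissible_angle O' (vadd O' (vscale c1 (dd (vsub Q1 O) w1 t)))
       (vadd O' (vscale c2 (dd (vsub Q2 O) w2 t)))
       (vadd O' (vscale c3 (dd (vsub Q3 O) w3 t))) (vadd O' (vscale c4 (dd (vsub Q4 O) w4 t)))).
Proof.
  intros [Hq Hnp] [t0 Hint].
  assert (HD := old_D O Q1 Q2 Q3 (proj1 Hq) Hnp).
  destruct (quad_rel Q1 Q2 Q3 Q4 O Hq) as [s [u [Hs [Hu Erel]]]].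
  destruct (dets_pos _ _ _ _ s u Hs Hu Erel HD) as [P1 [P2 P3]].
  destruct (old_adm O Q1 Q2 Q3 Q4 t0 Hint) as [b1 [b2 [b3 [b4 [Hb1 [Hb2 [Hb3 [Hb4 HP]]]]]]]].
  set (e1 := vsub Q1 O) in *. set (e2 := vsub Q2 O) in *. set (e3' := vsub Q3 O) in *.
  set (e4 := vsub Q4 O) in *.
  clearbody e1 e2 e3' e4.
  set (D := det3 e1 e2 e3') in *.
  assert (HDD : 0 < D * D) by (destruct (Rlt_or_le 0 D); [nra| destruct H; [nra| contradiction]]).
  assert (Hv0 : vsub (vscale t0 e3) (vscale b4 e4) = vadd (vscale b1 e1) (vadd (vscale b2 e2) (vscale b3 e3'))).
  { apply vcomp in HP. unfold lc4 in HP. clear -HP. destruct O, e1, e2, e3', e4; vunf.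
    destruct HP as [? [? ?]]. apply vec3_eq; simpl; lra. }
  assert (C1 : ev (fun t => 0 < det3 (dd e2 w2 t) (dd e3' w3 t) (dd e4 w4 t) * det3 (dd e1 w1 t) (dd e2 w2 t) (dd e3' w3 t))).
  { apply ev_pos; [contv| cbv beta; rewrite !dd0; exact P1]. }
  assert (C2 : ev (fun t => 0 < det3 (dd e1 w1 t) (dd e3' w3 t) (dd e4 w4 t) * det3 (dd e1 w1 t) (dd e2 w2 t) (dd e3' w3 t))).
  { apply ev_pos; [contv| cbv beta; rewrite !dd0; exact P2]. }
  assert (C3 : ev (fun t => 0 < det3 (dd e1 w1 t) (dd e2 w2 t) (dd e4 w4 t) * det3 (dd e1 w1 t) (dd e2 w2 t) (dd e3' w3 t))).
  { apply ev_pos; [contv| cbv beta; rewrite !dd0; exact P3]. }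
  assert (C4 : ev (fun t => 0 < det3 (dd e1 w1 t) (dd e2 w2 t) (dd e3' w3 t) * det3 (dd e1 w1 t) (dd e2 w2 t) (dd e3' w3 t))).
  { apply ev_pos; [contv| cbv beta; rewrite !dd0; exact HDD]. }
  assert (C5 : ev (fun t => 0 < det3 (vsub (vscale t0 e3) (vscale b4 (dd e4 w4 t))) (dd e2 w2 t) (dd e3' w3 t) * det3 (dd e1 w1 t) (dd e2 w2 t) (dd e3' w3 t))).
  { apply ev_pos; [contv| cbv beta; rewrite !dd0, Hv0].
    replace (det3 (vadd (vscale b1 e1) (vadd (vscale b2 e2) (vscale b3 e3'))) e2 e3') with (b1 * D)
      by (unfold D; vunf; ring). fold D. rewrite Rmult_assoc; apply Rmult_lt_0_compat; auto. }
  assert (C6 : ev (fun t => 0 < det3 (dd e1 w1 t) (vsub (vscale t0 e3) (vscale b4 (dd e4 w4 t))) (dd e3' w3 t) * det3 (dd e1 w1 t) (dd e2 w2 t) (dd e3' w3 t))).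
  { apply ev_pos; [contv| cbv beta; rewrite !dd0, Hv0].
    replace (det3 e1 (vadd (vscale b1 e1) (vadd (vscale b2 e2) (vscale b3 e3'))) e3') with (b2 * D)
      by (unfold D; vunf; ring). fold D. rewrite Rmult_assoc; apply Rmult_lt_0_compat; auto. }
  assert (C7 : ev (fun t => 0 < det3 (dd e1 w1 t) (dd e2 w2 t) (vsub (vscale t0 e3) (vscale b4 (dd e4 w4 t))) * det3 (dd e1 w1 t) (dd e2 w2 t) (dd e3' w3 t))).
  { apply ev_pos; [contv| cbv beta; rewrite !dd0, Hv0].
    replace (det3 e1 e2 (vadd (vscale b1 e1) (vadd (vscale b2 e2) (vscale b3 e3')))) with (b3 * D)
      by (unfold D; vunf; ring). fold D. rewrite Rmult_assoc; apply Rmult_lt_0_compat; auto. }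
  assert (C := ev_and _ _ C1 (ev_and _ _ C2 (ev_and _ _ C3 (ev_and _ _ C4 (ev_and _ _ C5 (ev_and _ _ C6 C7)))))).
  eapply ev_mono; [| exact C]. cbv beta.
  intros t [K1 [K2 [K3 [K4 [K5 [K6 K7]]]]]] O'.
  apply new_angle with (t0 := t0) (b4 := b4); auto.
Qed.

Definition Am (phi c1 c2 : R) (b : vec3) (t : R) (x : vec3) : vec3 :=
  vadd x (vscale t (iso_congruence phi c1 c2 b x)).

Lemma aff_plane phi c1 c2 b t X Y Z s u :
  Am phi c1 c2 b t (vadd X (vadd (vscale s (vsub Y X)) (vscale u (vsub Z X)))) =
  vadd (Am phi c1 c2 b t X) (vadd (vscale s (vsub (Am phi c1 c2 b t Y) (Am phi c1 c2 b t X)))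
     (vscale u (vsub (Am phi c1 c2 b t Z) (Am phi c1 c2 b t X)))).
Proof. unfold Am, iso_congruence. vext; ring. Qed.

Lemma aff_line phi c1 c2 b t P G l :
  Am phi c1 c2 b t (vadd P (vscale l (vsub G P))) =
  vadd (Am phi c1 c2 b t P) (vscale l (vsub (Am phi c1 c2 b t G) (Am phi c1 c2 b t P))).
Proof. unfold Am, iso_congruence. vext; ring. Qed.

Lemma in_plane_aff phi c1 c2 b t X Y Z P : in_plane X Y Z P ->
  in_plane (Am phi c1 c2 b t X) (Am phi c1 c2 b t Y) (Am phi c1 c2 b t Z) (Am phi c1 c2 b t P).
Proof. intros [s [u ->]]. exists s, u. apply aff_plane. Qed.

Lemma same_plane_aff phi c1 c2 b t X Y Z A B C : same_plane X Y Z A B C ->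
  same_plane (Am phi c1 c2 b t X) (Am phi c1 c2 b t Y) (Am phi c1 c2 b t Z)
             (Am phi c1 c2 b t A) (Am phi c1 c2 b t B) (Am phi c1 c2 b t C).
Proof.
  intros H P; split; intros [s [u ->]].
  - rewrite <- aff_plane. apply in_plane_aff, H. exists s, u; reflexivity.
  - rewrite <- aff_plane. apply in_plane_aff, H. exists s, u; reflexivity.
Qed.

Lemma det_aff phi c1 c2 b t A B C W :
  vdot (vcross (vsub (Am phi c1 c2 b t B) (Am phi c1 c2 b t A)) (vsub (Am phi c1 c2 b t C) (Am phi c1 c2 b t A)))
    (vadd W (vscale t (V3 (- phi * vy W) (phi * vx W) (c1 * vx W + c2 * vy W))))
  = (1 + t*t*phi*phi) * vdot (vcross (vsub B A) (vsub C A)) W.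
Proof. unfold Am, iso_congruence. vunf; ring. Qed.

Lemma convex_quad_aff phi c1 c2 b t A B C D : convex_quad A B C D ->
  convex_quad (Am phi c1 c2 b t A) (Am phi c1 c2 b t B) (Am phi c1 c2 b t C) (Am phi c1 c2 b t D).
Proof.
  intros [Hn [s [u [Hs [Hu E]]]]]. split.
  - unfold noncollinear in *. intro Z. apply Hn.
    set (n := vcross (vsub B A) (vsub C A)).
    assert (K := det_aff phi c1 c2 b t A B C n). rewrite Z in K. fold n in K.
    assert (K' : vdot vzero (vadd n (vscale t (V3 (- phi * vy n) (phi * vx n) (c1 * vx n + c2 * vy n)))) = 0)
      by (vunf; ring).
    rewrite K' in K. apply vdot_zero.
    assert (0 < 1 + t*t*phi*phi) by nra.
    apply (Rmult_eq_reg_l (1 + t*t*phi*phi)); lra.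
  - exists s, u. split; auto. split; auto.
    rewrite <- !aff_line. f_equal; exact E.
Qed.

Lemma same_plane_scale X Y Z O d d' c c' : c <> 0 -> c' <> 0 ->
  same_plane X Y Z O (vadd O d) (vadd O d') ->
  same_plane X Y Z O (vadd O (vscale c d)) (vadd O (vscale c' d')).
Proof.
  intros Hc Hc' H P. split; intro HP.
  - apply H in HP. destruct HP as [s [u ->]].
    exists (s / c), (u / c'). destruct O, d, d'; vext; field; auto.
  - apply H. destruct HP as [s [u ->]].
    exists (s * c), (u * c'). destruct O, d, d'; vext; field; auto.
Qed.

Lemma in_plane_1 X Y Z : in_plane X Y Z X.
Proof. exists 0, 0. vext; ring. Qed.
Lemma in_plane_2 X Y Z : in_plane X Y Z Y.
Proof. exists 1, 0. vext; ring. Qed.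
Lemma in_plane_3 X Y Z : in_plane X Y Z Z.
Proof. exists 0, 1. vext; ring. Qed.
Lemma in_plane_4 A B C D : convex_quad A B C D -> in_plane A B C D.
Proof.
  intros [_ [s [u [Hs [Hu E]]]]]. exists (1 - 1/u), (s/u).
  apply vcomp in E. destruct A, B, C, D; vunf. destruct E as [? [? ?]].
  apply vec3_eq; simpl; apply (Rmult_eq_reg_l u); try lra; field_simplify; lra.
Qed.

Lemma plane_coords X Y Z O Qa Qb P : same_plane X Y Z O Qa Qb -> in_plane X Y Z P ->
  exists x y, vsub P O = vadd (vscale x (vsub Qa O)) (vscale y (vsub Qb O)).
Proof.
  intros H HP. apply H in HP. destruct HP as [x [y ->]]. exists x, y. vext; ring.
Qed.

Lemma two_planes ea eb ec p x y x' y' : det3 ea eb ec <> 0 ->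
  p = vadd (vscale x ea) (vscale y eb) -> p = vadd (vscale x' eb) (vscale y' ec) ->
  p = vscale y eb.
Proof.
  intros HD E1 E2.
  assert (A1 : vdot p (vcross eb ec) = x * det3 ea eb ec) by (rewrite E1; vunf; ring).
  assert (A2 : vdot p (vcross eb ec) = 0) by (rewrite E2; vunf; ring).
  assert (x = 0). { rewrite A2 in A1. symmetry in A1. apply Rmult_integral in A1. tauto. }
  subst x. rewrite E1. vext; ring.
Qed.

Lemma in_plane_coords O Qa Qb X : in_plane O Qa Qb X ->
  exists x y, vsub X O = vadd (vscale x (vsub Qa O)) (vscale y (vsub Qb O)).
Proof. intros [x [y ->]]. exists x, y. vext; ring. Qed.

Lemma sub_zero X O : vsub X O = vzero -> X = O.
Proof. intro E. apply vcomp in E. destruct X, O; vunf. destruct E as [? [? ?]]. apply vec3_eq; simpl; lra. Qed.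

Lemma get_lambda G O P e y : G <> P -> P = O -> vsub G O = vscale y e ->
  exists l, e = vscale l (vsub G O).
Proof.
  intros HG HP E. subst P. destruct (Req_dec y 0) as [->|Hy].
  - exfalso. apply HG, sub_zero. rewrite E. vext; ring.
  - exists (1/y). rewrite E. destruct e; vext; field; auto.
Qed.

Lemma vertex_geom O Q1 Q2 Q3 Q4 G1 G2 G3 G4 P :
  is_convex_4hedral_angle O Q1 Q2 Q3 Q4 ->
  in_plane O Q1 Q2 P -> in_plane O Q1 Q2 G1 -> in_plane O Q1 Q2 G2 ->
  in_plane O Q2 Q3 P -> in_plane O Q2 Q3 G2 -> in_plane O Q2 Q3 G3 ->
  in_plane O Q3 Q4 P -> in_plane O Q3 Q4 G3 -> in_plane O Q3 Q4 G4 ->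
  in_plane O Q4 Q1 P -> in_plane O Q4 Q1 G4 -> in_plane O Q4 Q1 G1 ->
  G1 <> P -> G2 <> P -> G3 <> P -> G4 <> P ->
  P = O /\ (exists l1, vsub Q1 O = vscale l1 (vsub G1 O)) /\
  (exists l2, vsub Q2 O = vscale l2 (vsub G2 O)) /\
  (exists l3, vsub Q3 O = vscale l3 (vsub G3 O)) /\
  (exists l4, vsub Q4 O = vscale l4 (vsub G4 O)).
Proof.
  intros [Hq Hnp] P1 A1 B1 P2 B2 C2 P3 C3 D3 P4 D4 A4 nA nB nC nD.
  assert (HD := old_D O Q1 Q2 Q3 (proj1 Hq) Hnp).
  destruct (quad_rel Q1 Q2 Q3 Q4 O Hq) as [s [u [Hs [Hu Erel]]]].
  destruct (dets_pos _ _ _ _ s u Hs Hu Erel HD) as [K1 [K2 K3]].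
  apply in_plane_coords in P1, A1, B1, P2, B2, C2, P3, C3, D3, P4, D4, A4.
  set (e1 := vsub Q1 O) in *. set (e2 := vsub Q2 O) in *. set (e3' := vsub Q3 O) in *.
  set (e4 := vsub Q4 O) in *.
  assert (N1 : det3 e2 e3' e4 <> 0) by (intro Z; rewrite Z in K1; lra).
  assert (N2 : det3 e1 e3' e4 <> 0) by (intro Z; rewrite Z in K2; lra).
  assert (N3 : det3 e1 e2 e4 <> 0) by (intro Z; rewrite Z in K3; lra).
  assert (N41 : det3 e4 e1 e2 <> 0) by (replace (det3 e4 e1 e2) with (det3 e1 e2 e4) by (vunf; ring); auto).
  assert (N34 : det3 e3' e4 e1 <> 0) by (replace (det3 e3' e4 e1) with (det3 e1 e3' e4) by (vunf; ring); auto).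
  destruct P1 as [p1 [q1 EP1]], P2 as [p2 [q2 EP2]], P3 as [p3 [q3 EP3]], P4 as [p4 [q4 EP4]].
  assert (EPa := two_planes _ _ _ _ _ _ _ _ HD EP1 EP2).
  assert (EPb := two_planes _ _ _ _ _ _ _ _ N34 EP3 EP4).
  assert (HPO : P = O).
  { apply sub_zero. rewrite EPb.
    assert (Z : vdot (vsub P O) (vcross e1 e2) = q3 * det3 e1 e2 e4) by (rewrite EPb; vunf; ring).
    assert (Z' : vdot (vsub P O) (vcross e1 e2) = 0) by (rewrite EPa; vunf; ring).
    rewrite Z' in Z. symmetry in Z. apply Rmult_integral in Z. destruct Z as [Z|Z]; [|contradiction].
    rewrite Z. vext; ring. }
  split; [exact HPO|].
  destruct A1 as [a1 [b1 EA1]], A4 as [a4 [b4 EA4]].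
  destruct B1 as [a1' [b1' EB1]], B2 as [a2 [b2 EB2]].
  destruct C2 as [a2' [b2' EC2]], C3 as [a3 [b3 EC3]].
  destruct D3 as [a3' [b3' ED3]], D4 as [a4' [b4' ED4]].
  assert (GA := two_planes _ _ _ _ _ _ _ _ N41 EA4 EA1).
  assert (GB := two_planes _ _ _ _ _ _ _ _ HD EB1 EB2).
  assert (GC := two_planes _ _ _ _ _ _ _ _ N1 EC2 EC3).
  assert (GD := two_planes _ _ _ _ _ _ _ _ N34 ED3 ED4).
  repeat split.
  - eapply get_lambda; eauto.
  - eapply get_lambda; eauto.
  - eapply get_lambda; eauto.
  - eapply get_lambda; eauto.
Qed.

Definition Fp (F Vf : net) (t : R) : net := fun i j => vadd (F i j) (vscale t (Vf i j)).

Definition congr (m n : nat) (F Vf : net) : Prop :=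
  forall k l, (k < m)%nat -> (l < n)%nat ->
     exists (phi c1 c2 : R) (b : vec3),
       forall i j, (i = k \/ i = S k) -> (j = l \/ j = S l) ->
         Vf i j = iso_congruence phi c1 c2 b (F i j).

Lemma face_map m n F Vf k l : congr m n F Vf -> (k < m)%nat -> (l < n)%nat ->
  exists phi c1 c2 b, forall t i j, (i = k \/ i = S k) -> (j = l \/ j = S l) ->
    Fp F Vf t i j = Am phi c1 c2 b t (F i j).
Proof.
  intros H hk hl. destruct (H k l hk hl) as [phi [c1 [c2 [b Hb]]]].
  exists phi, c1, c2, b. intros t i j hi hj. unfold Fp, Am. rewrite Hb; auto.
Qed.

Lemma net_new m n F Vf t : is_net m n F -> congr m n F Vf -> is_net m n (Fp F Vf t).
Proof.
  intros HN HV i j hi hj. destruct (face_map m n F Vf i j HV hi hj) as [phi [c1 [c2 [b Hb]]]].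
  rewrite !Hb by auto. apply convex_quad_aff, HN; auto.
Qed.

Lemma new_pt phi c1 c2 b t O Q G l VG VO :
  vsub Q O = vscale l (vsub G O) ->
  Am phi c1 c2 b t O = vadd O (vscale t VO) -> Am phi c1 c2 b t G = vadd G (vscale t VG) ->
  Am phi c1 c2 b t Q = vadd (vadd O (vscale t VO)) (dd (vsub Q O) (vscale l (vsub VG VO)) t).
Proof.
  intros E HO HG.
  assert (EQ : Q = vadd O (vscale l (vsub G O))).
  { apply vcomp in E. destruct Q, O, G; vunf. destruct E as [? [? ?]]. apply vec3_eq; simpl; lra. }
  rewrite E. rewrite EQ at 1. rewrite aff_line, HO, HG. unfold dd. vext; ring.
Qed.

Lemma face_new phi c1 c2 b t X Y Z O Q Q' G G' l l' VG VG' VO c c' :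
  same_plane X Y Z O Q Q' ->
  vsub Q O = vscale l (vsub G O) -> vsub Q' O = vscale l' (vsub G' O) ->
  Am phi c1 c2 b t O = vadd O (vscale t VO) ->
  Am phi c1 c2 b t G = vadd G (vscale t VG) -> Am phi c1 c2 b t G' = vadd G' (vscale t VG') ->
  c <> 0 -> c' <> 0 ->
  same_plane (Am phi c1 c2 b t X) (Am phi c1 c2 b t Y) (Am phi c1 c2 b t Z) (vadd O (vscale t VO))
    (vadd (vadd O (vscale t VO)) (vscale c (dd (vsub Q O) (vscale l (vsub VG VO)) t)))
    (vadd (vadd O (vscale t VO)) (vscale c' (dd (vsub Q' O) (vscale l' (vsub VG' VO)) t))).
Proof.
  intros HS E E' HO HG HG' Hc Hc'.
  apply same_plane_scale; auto.
  rewrite <- (new_pt phi c1 c2 b t O Q G l VG VO E HO HG).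
  rewrite <- (new_pt phi c1 c2 b t O Q' G' l' VG' VO E' HO HG').
  rewrite <- HO. apply same_plane_aff; auto.
Qed.

Lemma vertex_new m n F Vf i j : dual_convex_net m n F -> congr m n F Vf ->
  (0 < i < m)%nat -> (0 < j < n)%nat -> ev (fun t => dual_convex_at (Fp F Vf t) i j).
Proof.
  intros [HN [_ [_ HDC]]] HV hi hj.
  assert (Hold := HDC i j hi hj).
  destruct i as [|i0]; [lia|]. destruct j as [|j0]; [lia|].
  destruct Hold as [O [Q1 [Q2 [Q3 [Q4 [Hang [Hadm [Hp1 [Hp2 [Hp3 Hp4]]]]]]]]]].
  unfold face_plane_eq in *. simpl pred in *.
  assert (q1 := HN i0 j0 ltac:(lia) ltac:(lia)).
  assert (q2 := HN (S i0) j0 ltac:(lia) ltac:(lia)).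
  assert (q3 := HN (S i0) (S j0) ltac:(lia) ltac:(lia)).
  assert (q4 := HN i0 (S j0) ltac:(lia) ltac:(lia)).
  destruct (noncoll_dist _ _ _ (proj1 q1)) as [_ d1].
  destruct (noncoll_dist _ _ _ (proj1 q3)) as [d3 _].
  destruct (noncoll_dist _ _ _ (proj1 q4)) as [d4 d4'].
  destruct (vertex_geom O Q1 Q2 Q3 Q4 (F i0 (S j0)) (F (S i0) j0) (F (S (S i0)) (S j0))
     (F (S i0) (S (S j0))) (F (S i0) (S j0)) Hang) as [HPO [[l1 E1] [[l2 E2] [[l3 E3] [l4 E4]]]]].
  all: try (apply Hp1; first [apply in_plane_1 | apply in_plane_2 | apply in_plane_3 | apply in_plane_4; exact q1]).
  all: try (apply Hp2; first [apply in_plane_1 | apply in_plane_2 | apply in_plane_3 | apply in_plane_4; exact q2]).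
  all: try (apply Hp3; first [apply in_plane_1 | apply in_plane_2 | apply in_plane_3 | apply in_plane_4; exact q3]).
  all: try (apply Hp4; first [apply in_plane_1 | apply in_plane_2 | apply in_plane_3 | apply in_plane_4; exact q4]).
  all: try (intro Z; symmetry in Z; contradiction).
  all: try (intro Z; contradiction).
  subst O.
  set (P := F (S i0) (S j0)) in *.
  set (V0 := Vf (S i0) (S j0)).
  assert (C := core P Q1 Q2 Q3 Q4
     (vscale l1 (vsub (Vf i0 (S j0)) V0)) (vscale l2 (vsub (Vf (S i0) j0) V0))
     (vscale l3 (vsub (Vf (S (S i0)) (S j0)) V0)) (vscale l4 (vsub (Vf (S i0) (S (S j0))) V0)) Hang Hadm).
  eapply ev_mono; [| exact C]. cbv beta. intros t Ht.
  destruct (Ht (vadd P (vscale t V0))) as [c1 [c2 [c3 [c4 [h1 [h2 [h3 [h4 [Hang' Hadm']]]]]]]]].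
  exists (vadd P (vscale t V0)).
  eexists _, _, _, _. split; [exact Hang'|]. split; [exact Hadm'|].
  unfold face_plane_eq. simpl pred.
  destruct (face_map m n F Vf i0 j0 HV ltac:(lia) ltac:(lia)) as [p1 [a1 [b1 [v1 M1]]]].
  destruct (face_map m n F Vf (S i0) j0 HV ltac:(lia) ltac:(lia)) as [p2 [a2 [b2 [v2 M2]]]].
  destruct (face_map m n F Vf (S i0) (S j0) HV ltac:(lia) ltac:(lia)) as [p3 [a3 [b3 [v3 M3]]]].
  destruct (face_map m n F Vf i0 (S j0) HV ltac:(lia) ltac:(lia)) as [p4 [a4 [b4 [v4 M4]]]].
  split; [|split; [|split]].
  - rewrite !(M1 t) by auto.
    eapply face_new; eauto; try lra;
      (unfold P, V0; rewrite <- M1 by auto; reflexivity).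
  - rewrite !(M2 t) by auto.
    eapply face_new; eauto; try lra;
      (unfold P, V0; rewrite <- M2 by auto; reflexivity).
  - rewrite !(M3 t) by auto.
    eapply face_new; eauto; try lra;
      (unfold P, V0; rewrite <- M3 by auto; reflexivity).
  - rewrite !(M4 t) by auto.
    eapply face_new; eauto; try lra;
      (unfold P, V0; rewrite <- M4 by auto; reflexivity).
Qed.

Theorem lemma2 (m n : nat) (F Vf : net) :
  dual_convex_net m n F ->
  (forall k l, (k < m)%nat -> (l < n)%nat ->
     exists (phi c1 c2 : R) (b : vec3),
       forall i j, (i = k \/ i = S k) -> (j = l \/ j = S l) ->
         Vf i j = iso_congruence phi c1 c2 b (F i j)) ->
  exists delta : R, 0 < delta /\
    forall t : R, Rabs t < delta ->
      dual_convex_net m n (fun i j => vadd (F i j) (vscale t (Vf i j))).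
Proof.
  intros Hdc HV. change (congr m n F Vf) in HV.
  assert (E : ev (fun t => forall i, (i < m)%nat -> forall j, (j < n)%nat ->
                (0 < i)%nat -> (0 < j)%nat -> dual_convex_at (Fp F Vf t) i j)).
  { apply (ev_forall_lt m (fun i t => forall j, (j < n)%nat ->
                (0 < i)%nat -> (0 < j)%nat -> dual_convex_at (Fp F Vf t) i j)).
    intros i hi.
    apply (ev_forall_lt n (fun j t => (0 < i)%nat -> (0 < j)%nat -> dual_convex_at (Fp F Vf t) i j)).
    intros j hj.
    destruct (Nat.eq_dec i 0) as [->|Hi]; [apply ev_true; intros; lia|].
    destruct (Nat.eq_dec j 0) as [->|Hj]; [apply ev_true; intros; lia|].
    eapply ev_mono; [| apply (vertex_new m n F Vf i j Hdc HV); lia].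
    intros t H _ _; exact H. }
  destruct E as [d [hd Hd]]. exists d. split; auto. intros t ht.
  change (dual_convex_net m n (Fp F Vf t)).
  destruct Hdc as [HN [Hm [Hn _]]].
  split; [apply net_new; auto|]. split; auto. split; auto.
  intros i j hi hj. apply Hd; auto; lia.
Qed.
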